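(* Let $a<b$, $n\in\mathbb{N}$, and let $X_n=\{x_0,\dots,x_n\}$ with $a=x_0<x_1<\dots<x_n=b$. Let $S=\{s_1,\dots,s_m\}\subset(a,b)$ be such that $s_\ell\in(x_{\alpha_\ell},x_{\alpha_\ell+1})$ for integers $0<\alpha_1<\dots<\alpha_m<n-1$ satisfying $\alpha_\ell+1<\alpha_{\ell+1}$ for $\ell=1,\dots,m-1$. Define the intervals $$I_0=[x_0,x_{\alpha_1}],\qquad I_\ell=[x_{\alpha_\ell+1},x_{\alpha_{\ell+1}}]\ (\ell=1,\dots,m-1),\qquad I_m=[x_{\alpha_m+1},x_n],$$ let $h^{\min}=\min_{\ell=0,\dots,m}|I_\ell|$ (length), and let $$h^{\max}_{X_n}=\max\{\,x_{i+1}-x_i:\ 0\le i\le n-1,\ s_\ell\notin(x_i,x_{i+1})\ \text{for all }\ell=1,\dots,m\,\}.$$ For $r>0$ and $x\in[a,b]$ let $\mathcal{I}_{r,x}$ be the set of closed intervals $I\subset\bigcup_{\ell=0}^m I_\ell$ with $|I|=r$ and $x\in I$, and define $$r_0=\inf\Big\{r\in\mathbb{R}_+:\ r\le h^{\min}\ \text{and}\ \forall x\in\textstyle\bigcup_{\ell=0}^m I_\ell\ \exists I\in\mathcal{I}_{r,x}\ \text{with}\ \mathrm{card}(I\cap X_n)\ge 1\Big\}.$$ If $h^{\min}\ge h^{\max}_{X_n}$, then $r_0$ exists (the set over which the infimum is taken is nonempty) and $r_0\in\mathbb{R}_+$, i.e. $r_0>0$.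
   Context: $\mathbb{R}_+$ denotes the positive reals; $\mathrm{card}$ denotes cardinality and $|I|$ the length of an interval $I$. *)

(* Defs.v *)
From HB Require Import structures.
From mathcomp Require Import all_boot all_order all_algebra.
From mathcomp Require Import classical_sets boolp reals.
Set Implicit Arguments. Unset Strict Implicit. Unset Printing Implicit Defensive.
Import Order.TTheory GRing.Theory Num.Theory.
Local Open Scope ring_scope.
Local Open Scope classical_set_scope.

(* Nodes x_0..x_n are [x i] for i <= n; singular points s_1..s_m are [s l]
   for 1 <= l <= m, with s_l in (x_{alpha l}, x_{alpha l + 1}). *)

(* Left / right node index of the interval I_l, 0 <= l <= m:
   I_0 = [x_0, x_{alpha_1}], I_l = [x_{alpha_l+1}, x_{alpha_{l+1}}],
   I_m = [x_{alpha_m+1}, x_n]  (for m = 0, I_0 = [x_0, x_n]). *)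
Definition Ilo (alpha : nat -> nat) (l : nat) : nat :=
  if l == 0%N then 0%N else (alpha l).+1.
Definition Ihi (n m : nat) (alpha : nat -> nat) (l : nat) : nat :=
  if l == m then n else alpha l.+1.

Definition Iunion (R : realType) (x : nat -> R) (n m : nat)
    (alpha : nat -> nat) : set R :=
  [set y | exists l : nat, (l <= m)%N /\
     x (Ilo alpha l) <= y /\ y <= x (Ihi n m alpha l)].

Definition hmin (R : realType) (x : nat -> R) (n m : nat)
    (alpha : nat -> nat) : R :=
  \big[Num.min/ (x (Ihi n m alpha 0) - x (Ilo alpha 0))]_(l < m.+1)
     (x (Ihi n m alpha l) - x (Ilo alpha l)).

Definition hmax (R : realType) (x : nat -> R) (n m : nat)
    (s : nat -> R) : R :=
  \big[Num.max/0]_(i < n |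
      [forall l : 'I_m, ~~ ((x i < s l.+1) && (s l.+1 < x i.+1))])
     (x i.+1 - x i).

Definition r0_set (R : realType) (x : nat -> R) (n m : nat)
    (alpha : nat -> nat) : set R :=
  [set r | 0 < r /\ r <= hmin x n m alpha /\
     forall y, Iunion x n m alpha y ->
       exists c d : R, d - c = r /\
         [set z | c <= z /\ z <= d] `<=` Iunion x n m alpha /\
         (c <= y /\ y <= d) /\
         (0 < #|[set i : 'I_n.+1 | ((c <= x i) && (x i <= d))%R]|)%N].

Definition r0 (R : realType) (x : nat -> R) (n m : nat)
    (alpha : nat -> nat) : R := inf (r0_set x n m alpha).

(* Main.v *)
Require Import Defs.
From HB Require Import structures.
From mathcomp Require Import all_boot all_order all_algebra.
From mathcomp Require Import classical_sets boolp reals.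
From mathcomp Require Import lra zify.
From Stdlib Require Import Lia.
Import Order.TTheory GRing.Theory Num.Theory.
Local Open Scope ring_scope.
Local Open Scope classical_set_scope.

Theorem theorem1 (R : realType) (a b : R) (n m : nat) (x : nat -> R)
    (s : nat -> R) (alpha : nat -> nat) :
  a < b ->
  x 0%N = a -> x n = b ->
  (forall i : nat, (i < n)%N -> x i < x i.+1) ->
  ((0 < m)%N -> (0 < alpha 1%N)%N) ->
  ((0 < m)%N -> (alpha m < n.-1)%N) ->
  (forall l : nat, (1 <= l)%N -> (l < m)%N -> ((alpha l).+1 < alpha l.+1)%N) ->
  (forall l : nat, (1 <= l)%N -> (l <= m)%N ->
     x (alpha l) < s l /\ s l < x (alpha l).+1) ->
  hmax x n m s <= hmin x n m alpha ->
  r0_set x n m alpha !=set0 /\ 0 < r0 x n m alpha.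
Proof.
move=> ab x0a xnb hx ha1 ham hainc hS hmm.
have xle : forall i j, (i <= j)%N -> (j <= n)%N -> x i <= x j.
  move=> i; elim=> [|j IH] hij hjn.
    by rewrite leqn0 in hij; rewrite (eqP hij).
  rewrite leq_eqVlt in hij; case/orP: hij => [/eqP -> //|hij].
  apply: (le_trans (IH hij (ltnW hjn))).
  exact/ltW/hx.
have xlt : forall i j, (i < j)%N -> (j <= n)%N -> x i < x j.
  move=> i j hij hjn.
  apply: (lt_le_trans (hx i (leq_trans hij hjn))).
  exact: xle.
have amono : forall l l', (1 <= l)%N -> (l < l')%N -> (l' <= m)%N ->
    (alpha l < alpha l')%N.
  move=> l; elim=> [//|k IH] h1 hl hk.
  have hkm : (k < m)%N by [].
  have hk1 : (1 <= k)%N by apply: leq_trans h1 _; rewrite -ltnS.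
  have := hainc k hk1 hkm.
  rewrite ltnS leq_eqVlt in hl; case/orP: hl => [/eqP ->|hl]; first lia.
  have := IH h1 hl (ltnW hk); lia.
have n0 : (0 < n)%N.
  case: n xnb {xle xlt hx ham hmm} => [|//]; move=> xnb.
  by move: ab; rewrite -x0a -xnb ltxx.
have aln : forall l, (1 <= l)%N -> (l <= m)%N -> (alpha l < n.-1)%N.
  move=> l h1 h2; have hm : (0 < m)%N by lia.
  have := ham hm.
  rewrite leq_eqVlt in h2; case/orP: h2 => [/eqP -> //|h2].
  have := amono l m h1 h2 (leqnn m); lia.
have lohi : forall l, (l <= m)%N ->
    (Ilo alpha l < Ihi n m alpha l)%N /\ (Ihi n m alpha l <= n)%N.
  move=> l hl; rewrite /Ilo /Ihi.
  case: eqP => [->|/eqP l0]; case: eqP => [em|/eqP lm].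
  - by subst m.
  - have m0 : (0 < m)%N by lia.
    have := ha1 m0; have := aln 1%N (leqnn 1) m0; lia.
  - subst l; have := aln m (ltac:(lia)) (leqnn m); lia.
  - have h1 : (1 <= l)%N by lia.
    have hlm : (l < m)%N by lia.
    have := hainc l h1 hlm; have := aln l.+1 (ltac:(lia)) hlm; lia.
have gap : forall l k, (l <= m)%N -> (Ilo alpha l <= k)%N ->
    (k < Ihi n m alpha l)%N -> x k.+1 - x k <= hmax x n m s.
  move=> l k hl hlo hhi.
  have [_ hin] := lohi l hl.
  have kn : (k < n)%N by lia.
  rewrite /hmax.
  have -> : x k.+1 - x k = (fun i : 'I_n => x i.+1 - x i) (Ordinal kn) by [].
  apply: le_bigmax_cond.
  apply/forallP => l'; apply/negP => /andP [h1 h2].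
  set L := l'.+1 in h1 h2.
  have hL1 : (1 <= L)%N by [].
  have hLm : (L <= m)%N by rewrite /L; exact: ltn_ord.
  have [hs1 hs2] := hS L hL1 hLm.
  have [kl|kg|ke] := ltngtP k (alpha L).
  - have := xle k.+1 (alpha L) kl (ltac:(have := aln L hL1 hLm; lia)).
    simpl in *; lra.
  - have := xle (alpha L).+1 k kg (ltnW kn).
    simpl in *; lra.
  - move: hlo hhi; rewrite /Ilo /Ihi ke.
    case: eqP => [l0|/eqP l0]; case: eqP => [lm|/eqP lm] //.
    + lia.
    + subst l => _ h.
      have : L = 1%N \/ (1 < L)%N by lia.
      case=> [hq|h']; first by move: h; rewrite hq; lia.
      have := amono 1%N L (leqnn _) h' hLm; lia.
    + subst l => h _.
      have : L = m \/ (L < m)%N by lia.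
      case=> [hq|h']; first by move: h; rewrite hq; lia.
      have := amono L m hL1 h' (leqnn _); lia.
    + move=> h h'.
      have : (L <= l)%N \/ (l < L)%N by lia.
      case=> hc.
      * have : L = l \/ (L < l)%N by lia.
        case=> [hq|h'']; first by move: h; rewrite hq; lia.
        have := amono L l hL1 h'' hl; lia.
      * have : L = l.+1 \/ (l.+1 < L)%N by lia.
        case=> [hq|h'']; first by move: h'; rewrite hq; lia.
        have := amono l.+1 L (ltac:(lia)) h'' hLm; lia.
have hminle : forall l, (l <= m)%N ->
    hmin x n m alpha <= x (Ihi n m alpha l) - x (Ilo alpha l).
  move=> l hl; rewrite /hmin.
  have hl' : (l < m.+1)%N by [].
  exact: (bigmin_le _ (Ordinal hl') (fun l : 'I_m.+1 => x (Ihi n m alpha l) - x (Ilo alpha l))).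
have Lpos : forall l, (l <= m)%N -> 0 < x (Ihi n m alpha l) - x (Ilo alpha l).
  move=> l hl; have [h1 h2] := lohi l hl; rewrite subr_gt0; exact: xlt.
have hmin0 : 0 < hmin x n m alpha.
  rewrite /hmin; apply: lt_bigmin; first exact: Lpos.
  by move=> i _; apply: Lpos; rewrite -ltnS.
have cover : forall l, (l <= m)%N -> forall k, (Ilo alpha l <= k)%N ->
    (k <= Ihi n m alpha l)%N -> forall y, x (Ilo alpha l) <= y -> y <= x k ->
    exists j, [/\ (Ilo alpha l <= j)%N, (j <= k)%N, y - hmin x n m alpha <= x j
       & x j <= y].
  move=> l hl; elim=> [|k IH] hlo hhi y h1 h2.
    rewrite leqn0 in hlo; rewrite (eqP hlo) in h1.
    exists 0%N; split; [by rewrite (eqP hlo)|done| lra| lra].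
  rewrite leq_eqVlt in hlo; case/orP: hlo => [/eqP hq|hlo].
    rewrite hq in h1; exists k.+1; split; [by rewrite hq|done|lra|lra].
  have [hy|hy] := leP y (x k).
    have [j [? ? ? ?]] := IH hlo (ltnW hhi) y h1 hy.
    by exists j; split => //; apply: leqW.
  exists k; split; [done|exact: leqnSn| |lra].
  have := gap l k hl hlo hhi; lra.
have ne : r0_set x n m alpha !=set0.
  exists (hmin x n m alpha); split; first exact: hmin0.
  split; first exact: lexx.
  move=> y [l [hl [h1 h2]]].
  have [hlo hhi] := lohi l hl.
  have hL := hminle l hl.
  have [hy|hy] := leP y (x (Ilo alpha l) + hmin x n m alpha).
    exists (x (Ilo alpha l)), (x (Ilo alpha l) + hmin x n m alpha).
    split; first lra.
    split.
      move=> z [z1 z2]; exists l; split => //; split; lra.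
    split; first (split; lra).
    apply/card_gt0P; exists (Ordinal (ltac:(lia) : (Ilo alpha l < n.+1)%N)).
    rewrite inE /=; apply/andP; split; lra.
  exists (y - hmin x n m alpha), y.
  split; first lra.
  split.
    move=> z [z1 z2]; exists l; split => //; split; lra.
  split; first (split; lra).
  have [j [j1 j2 j3 j4]] := cover l hl (Ihi n m alpha l) (ltnW hlo) (leqnn _) y h1 h2.
  apply/card_gt0P; exists (Ordinal (ltac:(lia) : (j < n.+1)%N)).
  rewrite inE /=; apply/andP; split; lra.
split => //.
have x01 : x 0%N < x 1%N by exact: hx.
apply: (@lt_le_trans _ _ ((x 1%N - x 0%N) / 2)); first lra.
apply: lb_le_inf => // r [r0 [_ hr]].
have [hlo hhi] := lohi 0%N (leq0n _).
have : Iunion x n m alpha ((x 0%N + x 1%N) / 2).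
  exists 0%N; split => //; rewrite /Ilo /=; split; first lra.
  have := xle 1%N (Ihi n m alpha 0) hlo hhi; lra.
move=> /hr [c [d [hcd [_ [[hc hd] /card_gt0P [i]]]]]].
rewrite inE => /andP [i1 i2].
case: (posnP i) => hi.
  by move: i1 i2; rewrite hi => i1 i2; lra.
have := xle 1%N i hi (ltac:(have := ltn_ord i; lia)); lra.
Qed.
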